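(* A function $f:\mathbb{N}^d\to\mathbb{N}$ is stably computable by an output-oblivious CRN if and only if it is stably computable by an output-monotonic CRN.
   Context: A chemical reaction network (CRN) is a pair $(\mathcal{S},\mathcal{R})$ of a finite set of species and a finite set of reactions $(\vec{R},\vec{P})\in\mathbb{N}^{\mathcal{S}}\times\mathbb{N}^{\mathcal{S}}$. A configuration is $\vec{C}\in\mathbb{N}^{\mathcal{S}}$; a reaction is applicable if $\vec{R}\le\vec{C}$ and yields $\vec{C}-\vec{R}+\vec{P}$; reachability is via finite sequences of applicable reactions. To compute $f:\mathbb{N}^d\to\mathbb{N}$ a CRN has input species $X_1,\ldots,X_d$, output species $Y$, leader species $L$; the initial configuration $\vec{I}_{\vec{x}}$ has $\vec{x}(i)$ copies of $X_i$, one $L$, nothing else. $\vec{C}$ is stable if all configurations reachable from it have the same count of $Y$. The CRN stably computes $f$ if for every $\vec{x}$ and every $\vec{C}$ reachable from $\vec{I}_{\vec{x}}$ some stable $\vec{O}$ reachable from $\vec{C}$ has $\vec{O}(Y)=f(\vec{x})$. A CRN is output-oblivious if $\vec{R}(Y)=0$ for every reaction $(\vec{R},\vec{P})$; it is output-monotonic if no reaction decreases the count of $Y$, i.e. $\vec{P}(Y)\ge\vec{R}(Y)$ for every reaction. *)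

(* Defs.v *)
From Stdlib Require List.
From mathcomp Require Import all_boot.
From Stdlib Require Import Relation_Operators.
Unset Printing Implicit Defensive.

(* Species are 'I_nsp (a finite set),
   a configuration is a map 'I_nsp -> nat, a reaction is a pair (R, P) of
   configurations, and the finite set of reactions is a list. *)
Record CRN (d : nat) := mkCRN {
  nsp : nat;
  reactions : seq (('I_nsp -> nat) * ('I_nsp -> nat));
  inX : 'I_d -> 'I_nsp;
  outY : 'I_nsp;
  leadL : 'I_nsp;
  inX_inj : injective inX;
  L_notX : forall i, inX i <> leadL;
  Y_notX : forall i, inX i <> outY;
  Y_notL : outY <> leadL
}.
Arguments nsp {d}. Arguments reactions {d}. Arguments inX {d}. Arguments outY {d}. Arguments leadL {d}.

Definition config {d} (C : CRN d) := 'I_(nsp C) -> nat.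

Definition applicable {d} (C : CRN d) (r : config C * config C) (c : config C) :=
  forall s, r.1 s <= c s.

Definition step {d} (C : CRN d) (c c' : config C) : Prop :=
  exists2 r, List.In r (reactions C) &
    applicable C r c /\ forall s, c' s = c s - r.1 s + r.2 s.

Definition reachable {d} (C : CRN d) : config C -> config C -> Prop :=
  clos_refl_trans (config C) (step C).

Definition init_config {d} (C : CRN d) (x : 'I_d -> nat) : config C :=
  fun s => if s == leadL C then 1
           else if [pick i | inX C i == s] is Some i then x i else 0.

Definition stable {d} (C : CRN d) (c : config C) : Prop :=
  forall c', reachable C c c' -> c' (outY C) = c (outY C).

Definition stably_computes {d} (C : CRN d) (f : ('I_d -> nat) -> nat) : Prop :=
  forall x c, reachable C (init_config C x) c ->
    exists o, reachable C c o /\ stable C o /\ o (outY C) = f x.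

Definition output_oblivious {d} (C : CRN d) : Prop :=
  forall r, List.In r (reactions C) -> r.1 (outY C) = 0.

Definition output_monotonic {d} (C : CRN d) : Prop :=
  forall r, List.In r (reactions C) -> r.1 (outY C) <= r.2 (outY C).

(* Main.v *)
Require Import Defs.
From mathcomp Require Import all_boot.
From mathcomp Require Import zify.
From Stdlib Require Import Relation_Operators FunctionalExtensionality Lia.

Set Implicit Arguments.
Section Conv.
Variable d : nat.
Variable C : CRN d.
Hypothesis mono : output_monotonic C.
Local Notation n := (nsp C).
Local Notation Y := (outY C).

Definition wid (t : 'I_n) : 'I_n.+1 := widen_ord (leqnSn n) t.
Definition extw (c : 'I_n -> nat) (k : nat) : 'I_n.+1 -> nat :=
  fun s => if insub (val s) is Some t then c t else k.
Definition ext c := extw c (c Y).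
Definition proj (c : 'I_n.+1 -> nat) : 'I_n -> nat := fun t => c (wid t).
Definition convr (r : ('I_n -> nat) * ('I_n -> nat)) :=
  (extw r.1 0, extw r.2 (r.2 Y - r.1 Y)).

Lemma extw_wid c k t : extw c k (wid t) = c t.
Proof.
rewrite /extw; case: insubP => [u _ hu|/negP []]; last by rewrite /= (ltn_ord t).
by congr c; apply: val_inj.
Qed.

Lemma extw_max c k : extw c k ord_max = k.
Proof.
rewrite /extw; case: insubP => [u _ hu|] //.
by move: (ltn_ord u); rewrite hu /= ltnn.
Qed.

Lemma wid_inj : injective wid.
Proof. by move=> a b /(congr1 val) /= h; apply: val_inj. Qed.

Lemma wid_neq_max t : wid t <> ord_max.
Proof. move=> /(congr1 val) /= h; by move: (ltn_ord t); rewrite h ltnn. Qed.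

Lemma cases (s : 'I_n.+1) : (exists t, s = wid t) \/ s = ord_max.
Proof.
case: (ltnP s n) => h.
  left; exists (Ordinal h); exact: val_inj.
right; apply: val_inj => /=; have := ltn_ord s; lia.
Qed.

Definition C' : CRN d.
refine (@mkCRN d n.+1 (map convr (reactions C)) (fun i => wid (inX C i))
  ord_max (wid (leadL C)) _ _ _ _).
- by move=> i j /wid_inj /(@inX_inj _ C).
- by move=> i /wid_inj; apply: (@L_notX _ C).
- by move=> i; apply: wid_neq_max.
- by move=> h; exact: (wid_neq_max (esym h)).
Defined.

Definition good (c : 'I_n.+1 -> nat) := c ord_max = c (wid Y).

Lemma good_step c1 c2 : step C' c1 c2 -> good c1 ->
  step C (proj c1) (proj c2) /\ good c2.
Proof.
case=> r' /List.in_map_iff [r [<- Hr]] [Happ Hc] Hg.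
split.
  exists r => //; split.
    by move=> s; have := Happ (wid s); rewrite /= extw_wid.
  by move=> s; rewrite /proj Hc /= !extw_wid.
rewrite /good !Hc /= !extw_max !extw_wid.
have := Happ (wid Y); rewrite /= extw_wid.
have := mono r Hr. rewrite /good in Hg. lia.
Qed.

Lemma sim_step c c' : step C c c' -> step C' (ext c) (ext c').
Proof.
case=> r Hr [Happ Hc]; exists (convr r).
  by apply: List.in_map.
split.
  move=> s; case: (cases s) => [[t ->]|->]; rewrite /ext /= ?extw_wid ?extw_max //.
move=> s; case: (cases s) => [[t ->]|->]; rewrite /ext /= ?extw_wid ?extw_max //.
have h1 : r.1 Y <= c Y := Happ Y.
have h2 := Hc Y; have h3 : r.1 Y <= r.2 Y := mono r Hr; lia.
Qed.

Lemma good_reach c1 c2 : reachable C' c1 c2 -> good c1 ->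
  reachable C (proj c1) (proj c2) /\ good c2.
Proof.
move=> H; induction H as [x y Hs|x|x y z _ IH1 _ IH2] => Hg.
- have [? ?] := good_step Hs Hg; split=> //; exact: rt_step.
- split=> //; exact: rt_refl.
- have [h1 g1] := IH1 Hg; have [h2 g2] := IH2 g1; split=> //; exact: rt_trans h2.
Qed.

Lemma sim_reach c c' : reachable C c c' -> reachable C' (ext c) (ext c').
Proof.
move=> H; induction H as [x y Hs|x|x y z _ IH1 _ IH2].
- exact/rt_step/sim_step.
- exact: rt_refl.
- exact: rt_trans IH2.
Qed.

Lemma proj_ext c : proj (ext c) = c.
Proof. by apply: functional_extensionality => t; rewrite /proj /ext extw_wid. Qed.

Lemma ext_proj c : good c -> ext (proj c) = c.
Proof.
move=> Hg; apply: functional_extensionality => s.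
case: (cases s) => [[t ->]|->]; rewrite /ext ?extw_wid ?extw_max //.
Qed.

Lemma ext_good c : good (ext c).
Proof. by rewrite /good /ext extw_max extw_wid. Qed.

Lemma init_ext x : init_config C' x = ext (init_config C x).
Proof.
apply: functional_extensionality => s.
case: (cases s) => [[t ->]|->]; rewrite /ext ?extw_wid ?extw_max /init_config /=.
  have E : [pick i | wid (inX C i) == wid t] = [pick i | inX C i == t].
    by apply: eq_pick => i /=; rewrite (inj_eq wid_inj).
  by rewrite (inj_eq wid_inj) E.
have /negbTE -> : ord_max != wid (leadL C).
  by apply/eqP => h; exact: (wid_neq_max (esym h)).
have /negbTE -> : Y != leadL C by apply/eqP; exact: (@Y_notL _ C).
case: pickP => [i /eqP h|_]; first by exfalso; exact: (wid_neq_max h).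
case: pickP => [i /eqP h|_] //; by exfalso; apply: (@Y_notX _ C i).
Qed.

Lemma C'_oblivious : output_oblivious C'.
Proof.
move=> r /List.in_map_iff [r0 [<- _]]; by rewrite /= extw_max.
Qed.

Lemma C'_computes f : stably_computes C f -> stably_computes C' f.
Proof.
move=> Hf x c Hr.
rewrite init_ext in Hr.
have [Hr' Hg] := good_reach Hr (ext_good _).
rewrite proj_ext in Hr'.
have [o [Ho [Hs Hv]]] := Hf x _ Hr'.
exists (ext o); split; last split.
- rewrite -{1}(ext_proj Hg); exact: sim_reach.
- move=> c3 H3.
  have [H4 g4] := good_reach H3 (ext_good _).
  rewrite proj_ext in H4.
  change (c3 ord_max = ext o ord_max).
  rewrite g4 /ext extw_max; exact: (Hs _ H4).
- change (ext o ord_max = f x); by rewrite /ext extw_max.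
Qed.

End Conv.

Theorem mainTheorem11 (d : nat) (f : ('I_d -> nat) -> nat) :
  (exists C : CRN d, output_oblivious C /\ stably_computes C f) <->
  (exists C : CRN d, output_monotonic C /\ stably_computes C f).
Proof.
split.
  move=> [C [Ho Hs]]; exists C; split=> // r Hr; by rewrite (Ho r Hr).
move=> [C [Hm Hs]]; exists (C' C); split.
  exact: C'_oblivious.
exact: C'_computes.
Qed.
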